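(* Fix one of the following settings: (i) real polynomials in one variable $x$, with ''distinguished set'' the point $x=1$; (ii) real polynomials in two variables $x,y$, with distinguished set the line $x+y=1$; (iii) real polynomials in three variables $x,y,z$, with distinguished set the plane $x+y+z=1$. Call a polynomial good if it equals $1$ on the distinguished set, has only non-negative coefficients, and has zero constant term. Let $f$ be a good polynomial and $a$ a positive integer. Then there are good polynomials $g$ and $h$ with $N(g)=aN(f)$ and $N(h)=aN(f)-(a-1)$. Moreover, if $f$ is invariant under a finite group $\Gamma$ of diagonal unitary matrices acting on the variables (e.g. $x\mapsto \eta x$; $(x,y)\mapsto(\eta x,\eta y)$; $(x,y)\mapsto(\eta x,\eta^2y)$; $(x,y,z)\mapsto(\eta x,\eta^2 y,\eta^4z)$ for a root of unity $\eta$), then $g$ and $h$ may be chosen $\Gamma$-invariant.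
   Context: $N(f)$ denotes the number of distinct monomials with nonzero coefficient in $f$. A polynomial $f$ is $\Gamma$-invariant if $f(\gamma\mathbf{x})=f(\mathbf{x})$ for all $\gamma\in\Gamma$. *)

(* Defs.v *)
From HB Require Import structures.
From mathcomp Require Import all_boot all_order all_algebra.
From mathcomp Require Import mpoly.
From mathcomp Require Import complex.
Set Implicit Arguments. Unset Strict Implicit. Unset Printing Implicit Defensive.
Import Order.TTheory GRing.Theory Num.Theory.
Local Open Scope ring_scope.

Definition Nmon (R : nzRingType) (n : nat) (f : {mpoly R[n]}) : nat :=
  size (msupp f).

Definition good (R : rcfType) (n : nat) (f : {mpoly R[n]}) : Prop :=
  [/\ forall x : 'I_n -> R, \sum_(i < n) x i = 1 -> f.@[x] = 1,
      forall m : 'X_{1..n}, 0 <= f@_m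
    & f@_0%MM = 0].

Definition adjmx (R : rcfType) (n : nat) (A : 'M[complex R]_n) : 'M[complex R]_n :=
  (map_mx (@conjc R) A)^T.

Definition diag_unitary_group (R : rcfType) (n : nat)
    (Gam : seq 'M[complex R]_n) : Prop :=
  [/\ (1%:M : 'M[complex R]_n) \in Gam,
      forall A B, A \in Gam -> B \in Gam -> A *m B \in Gam,
      forall A, A \in Gam -> exists2 B, B \in Gam & A *m B = 1%:M,
      forall A, A \in Gam -> is_diag_mx A
    & forall A, A \in Gam -> A *m adjmx A = 1%:M].

Definition gamma_invariant (R : rcfType) (n : nat) (Gam : seq 'M[complex R]_n)
    (f : {mpoly R[n]}) : Prop :=
  forall gam, gam \in Gam -> forall x : 'cV[complex R]_n,
    (map_mpoly (real_complex R) f).@[fun i => (gam *m x) i ord0]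
    = (map_mpoly (real_complex R) f).@[fun i => x i ord0].

(* Main.v *)
Require Import Defs.
From HB Require Import structures.
From mathcomp Require Import all_boot all_order all_algebra.
From mathcomp Require Import mpoly.
From mathcomp Require Import complex.
Import Order.TTheory GRing.Theory Num.Theory.
Local Open Scope ring_scope.

From mathcomp Require Import zify.
Set Implicit Arguments. Unset Strict Implicit.

Lemma kron_inj (K : nat) (n : nat) (a b : 'I_n -> nat) :
  (forall i, a i < K)%N -> (forall i, b i < K)%N ->
  (\sum_(i < n) a i * K ^ i = \sum_(i < n) b i * K ^ i)%N -> forall i, a i = b i.
Proof.
elim: n a b => [|n IH] a b Ha Hb; first by move=> _ [].
rewrite !big_ord_recl /= !expn0 !muln1.
have e c : (\sum_(i < n) c (lift ord0 i) * K ^ bump 0 i = K * \sum_(i < n) c (lift ord0 i) * K ^ i)%N.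
  rewrite big_distrr /=; apply: eq_bigr => i _; rewrite /bump /= add1n expnS; lia.
rewrite !e => E.
have K0 : (0 < K)%N by apply: leq_ltn_trans (Ha ord0).
have E0 : a ord0 = b ord0.
  move: (congr1 (modn^~ K) E) => /=; rewrite !(addnC (_ ord0)) ![(K * _)%N]mulnC !modnMDl !modn_small //.
have E1 : (\sum_(i < n) a (lift ord0 i) * K ^ i = \sum_(i < n) b (lift ord0 i) * K ^ i)%N.
  move: E; rewrite E0 => /addnI /eqP; rewrite eqn_mul2l => /orP [|/eqP //].
  by rewrite eqn0Ngt K0.
move=> [[|j] hj].
  by rewrite (_ : Ordinal hj = ord0) //; apply: val_inj.
have hj' : (j < n)%N by [].
have := IH _ _ (fun i => Ha _) (fun i => Hb _) E1 (Ordinal hj').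
by rewrite (_ : lift ord0 (Ordinal hj') = Ordinal hj) //; apply: val_inj.
Qed.

Lemma poly_vanish (C : numFieldType) (P : {poly C}) :
  (forall t, P.[t] = 0) -> P = 0.
Proof.
move=> H; apply/eqP; apply/negPn/negP => nz.
pose rs := [seq (i%:R : C) | i <- iota 0 (size P)].
have A : all (root P) rs by apply/allP => x _; rewrite /root H.
have U : uniq rs.
  by rewrite map_inj_uniq ?iota_uniq // => i j; by move/eqP; rewrite eqr_nat => /eqP.
have := max_poly_roots nz A U.
by rewrite size_map size_iota ltnn.
Qed.

Lemma extract (C : numFieldType) n (F : {mpoly C[n]}) (d : 'I_n -> C) :
  (forall v, F.@[fun i => d i * v i] = F.@[v]) ->
  forall m, m \in msupp F -> \prod_i d i ^+ m i = 1.
Proof.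
move=> H m0 m0F.
pose K := msize F.
pose phi (m : 'X_{1..n}) := (\sum_(i < n) m i * K ^ i)%N.
pose c m := F@_m * (\prod_i d i ^+ m i - 1).
pose P : {poly C} := \sum_(m <- msupp F) c m *: 'X^(phi m).
have bnd m : m \in msupp F -> forall i, (m i < K)%N.
  move=> mF i; apply: leq_ltn_trans (msize_mdeg_lt mF).
  by rewrite mdegE (bigD1 i) //= leq_addr.
have P0 : P = 0.
  apply: poly_vanish => t.
  have E := H (fun i => t ^+ (K ^ i)); rewrite !mevalE in E.
  have -> : 0 = \sum_(m <- msupp F) (F@_m * \prod_(i < n) (d i * t ^+ (K ^ i)) ^+ m i
       - F@_m * \prod_(i < n) (t ^+ (K ^ i)) ^+ m i) by rewrite sumrB E subrr.
  rewrite /P horner_sum; apply: eq_bigr => m _.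
  rewrite hornerZ hornerXn /c -mulrBr -mulrA mulrBl mul1r; congr (_ * (_ - _)).
    rewrite /phi expr_sum -big_split /=; apply: eq_bigr => i _.
    by rewrite exprMn -exprM mulnC.
  by rewrite /phi expr_sum; apply: eq_bigr => i _; rewrite -exprM mulnC.
have := congr1 (fun p : {poly C} => p`_(phi m0)) P0.
rewrite /P coef_sumMXn coef0 big_mkcond (bigD1_seq m0) ?msupp_uniq //= eqxx.
rewrite big1_seq ?addr0.
  rewrite /c => /eqP; rewrite mulf_eq0 mcoeff_eq0 m0F /= subr_eq0 => /eqP //.
move=> m /andP [nm mF]; case: ifP => // /eqP E.
case/eqP: nm; apply/mnmP => i.
apply: (@kron_inj K n (fun i => m i) (fun i => m0 i)) => //; [exact: bnd | exact: bnd].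
Qed.


Fixpoint Pk (R : nzRingType) n (f w : {mpoly R[n]}) (k : nat) : {mpoly R[n]} :=
  if k is kk.+1 then (f - w) + w * @Pk R n f w kk else f.


Definition nonneg (R : rcfType) n (p : {mpoly R[n]}) := forall m, 0 <= p@_m.

Lemma nonnegM (R : rcfType) n (p q : {mpoly R[n]}) :
  nonneg p -> nonneg q -> nonneg (p * q).
Proof.
move=> hp hq m; rewrite mcoeffM; apply: sumr_ge0 => i _; exact: mulr_ge0.
Qed.

Lemma nonnegD (R : rcfType) n (p q : {mpoly R[n]}) :
  nonneg p -> nonneg q -> nonneg (p + q).
Proof. by move=> hp hq m; rewrite mcoeffD addr_ge0. Qed.

Section Construct.
Variables (R : rcfType) (n : nat) (f : {mpoly R[n]}) (m0 : 'X_{1..n}) (lam : R).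
Hypotheses (Hf : good f) (m0f : m0 \in msupp f)
  (m0max : forall m, m \in msupp f -> (mdeg m <= mdeg m0)%N)
  (lam0 : 0 < lam) (lamc : lam <= f@_m0).

Let w : {mpoly R[n]} := lam *: 'X_[m0].

Lemma m0_neq0 : m0 != 0%MM.
Proof.
case: Hf => _ _ f0; apply/eqP => E; move: m0f; rewrite mcoeff_msupp E f0.
by rewrite eqxx.
Qed.

Lemma supp_fw m : m \in msupp (f - w) -> (mdeg m <= mdeg m0)%N.
Proof.
move/msuppB_le; rewrite mem_cat msuppMCX ?lt0r_neq0 // mem_seq1.
by case/orP => [/m0max //| /eqP ->].
Qed.

Lemma supp_wP (P : {mpoly R[n]}) :
  perm_eq (msupp (w * P)) [seq (m0 + m')%MM | m' <- msupp P].
Proof.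
rewrite /w -scalerAl -commr_mpolyX.
apply: (perm_trans (msuppZ _ (lt0r_neq0 lam0))); exact: msuppMX.
Qed.

Lemma Pk_good k : good (Pk f w k) /\
  Nmon (Pk f w k) = (Nmon f + k * Nmon (f - w))%N.
Proof.
elim: k => [|k [[IH1 IH2 IH3] IHN]] /=; first by rewrite mul0n addn0.
have wnn : nonneg w.
  by move=> m; rewrite /w mcoeffZ mcoeffX mulr_ge0 ?ler0n // ltW.
have fwnn : nonneg (f - w).
  case: Hf => _ Hf2 _ m; rewrite mcoeffB /w mcoeffZ mcoeffX.
  by case: eqP => [<-|_]; rewrite ?mulr1 ?mulr0 ?subr0 ?subr_ge0.
split; first split.
- move=> x Hx; case: Hf => Hf1 _ _.
  by rewrite mevalD mevalB mevalM IH1 // Hf1 // mulr1 subrK.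
- by apply: nonnegD => //; apply: nonnegM.
- rewrite mcoeffD mcoeffB (mcoeff0_is_multiplicative _ _).1 IH3 mulr0 addr0.
  case: Hf => _ _ ->; rewrite /w mcoeffZ mcoeffX (negbTE m0_neq0) mulr0 subr0 //.
have Pnz m : m \in msupp (Pk f w k) -> m != 0%MM.
  by rewrite mcoeff_msupp; apply: contra => /eqP ->; rewrite IH3.
rewrite /Nmon (perm_size (msuppD _)).
  have s1 : size (msupp (w * Pk f w k)) = size (msupp (Pk f w k)).
    by rewrite (perm_size (supp_wP _)) size_map.
  rewrite size_cat s1; move: IHN; rewrite /Nmon => ->.
  by rewrite mulSn addnCA.
move=> m /=; apply/negbTE/negP => /andP [/supp_fw h1].
rewrite (perm_mem (supp_wP _)) => /mapP [m' /Pnz h2 E].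
move: h1; rewrite E mdegD -mdeg_eq0 in h2 *; lia.
Qed.

End Construct.

Lemma Nmon_full (R : rcfType) n (f : {mpoly R[n]}) m0 (lam : R) :
  0 < lam -> lam < f@_m0 -> Nmon (f - lam *: 'X_[m0]) = Nmon f.
Proof.
move=> lam0 lt; rewrite /Nmon; apply: perm_size; apply: uniq_perm; rewrite ?msupp_uniq //.
move=> m; rewrite !mcoeff_msupp mcoeffB mcoeffZ mcoeffX.
have [<-|ne] := eqVneq m0 m; last by rewrite /= mulr0 subr0.
by rewrite /= mulr1 subr_eq0 (gt_eqF lt) (gt_eqF (lt_trans lam0 lt)).
Qed.

Lemma Nmon_cut (R : rcfType) n (f : {mpoly R[n]}) m0 :
  m0 \in msupp f -> Nmon (f - f@_m0 *: 'X_[m0]) = (Nmon f).-1.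
Proof.
move=> m0f; rewrite /Nmon -(size_rem m0f); apply: perm_size; apply: uniq_perm.
- exact: msupp_uniq.
- exact/rem_uniq/msupp_uniq.
move=> m; rewrite (mem_rem_uniq _ (msupp_uniq f)) inE !mcoeff_msupp mcoeffB mcoeffZ mcoeffX.
have [<-|ne] := eqVneq m0 m; first by rewrite /= mulr1 subrr eqxx.
by rewrite /= mulr0 subr0.
Qed.

Section Inv.
Variables (R : rcfType) (n : nat) (Gam : seq 'M[complex R]_n).

Lemma ginvD p q : gamma_invariant Gam p -> gamma_invariant Gam q ->
  gamma_invariant Gam (p + q).
Proof. by move=> hp hq g gG x; rewrite !rmorphD; congr (_ + _); [exact: hp | exact: hq]. Qed.
Lemma ginvB p q : gamma_invariant Gam p -> gamma_invariant Gam q ->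
  gamma_invariant Gam (p - q).
Proof. by move=> hp hq g gG x; rewrite !rmorphB; congr (_ - _); [exact: hp | exact: hq]. Qed.
Lemma ginvM p q : gamma_invariant Gam p -> gamma_invariant Gam q ->
  gamma_invariant Gam (p * q).
Proof. by move=> hp hq g gG x; rewrite !rmorphM; congr (_ * _); [exact: hp | exact: hq]. Qed.
Lemma ginvZ c p : gamma_invariant Gam p -> gamma_invariant Gam (c *: p).
Proof. by move=> hp g gG x; rewrite !map_mpolyZ !mevalZ hp. Qed.

Lemma diag_mul (g : 'M[complex R]_n) (x : 'cV[complex R]_n) i :
  is_diag_mx g -> (g *m x) i ord0 = g i i * x i ord0.
Proof.
move/is_diag_mxP => D; rewrite mxE (bigD1 i) //= big1 ?addr0 // => j nj.
by rewrite D ?mul0r // eq_sym.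
Qed.

Lemma ginvX (m0 : 'X_{1..n}) : (forall g, g \in Gam -> is_diag_mx g) ->
  (forall g, g \in Gam -> \prod_i g i i ^+ m0 i = 1) ->
  gamma_invariant Gam 'X_[m0].
Proof.
move=> Dg Hg g gG x; rewrite map_mpolyX !mevalX.
under eq_bigr => i _ do rewrite diag_mul ?Dg // exprMn.
by rewrite big_split /= Hg // mul1r.
Qed.

Lemma ginv_extract (f : {mpoly R[n]}) (m0 : 'X_{1..n}) : (forall g, g \in Gam -> is_diag_mx g) ->
  gamma_invariant Gam f -> m0 \in msupp f ->
  forall g, g \in Gam -> \prod_i g i i ^+ m0 i = 1.
Proof.
move=> Dg Hf m0f g gG.
apply: (@extract _ _ (map_mpoly (real_complex R) f)).
  move=> v; have := Hf g gG (\col_i v i).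
  have e1 : (fun i => (g *m \col_i v i) i ord0) =1 (fun i => g i i * v i).
    by move=> i; rewrite diag_mul ?Dg // mxE.
  have e2 : (fun i => (\col_i v i : 'cV[complex R]_n) i ord0) =1 v.
    by move=> i; rewrite mxE.
  by rewrite (meval_eq _ e1) (meval_eq _ e2).
by rewrite (perm_mem (msupp_map_mpoly _ (fmorph_inj _))).
Qed.

End Inv.

Lemma key (N b : nat) : (N.+1 + b * N.+1.-1 = (b + 1) * N.+1 - b)%N.
Proof. rewrite succnK mulnDl mul1n mulnS. lia. Qed.

Lemma ginvPk (R : rcfType) n (Gam : seq 'M[complex R]_n) (f w : {mpoly R[n]}) k :
  gamma_invariant Gam f -> gamma_invariant Gam w -> gamma_invariant Gam (Pk f w k).
Proof.
move=> hf hw; elim: k => [|k IH]; first exact: hf.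
by apply: ginvD; [apply: ginvB | apply: ginvM].
Qed.

Unset Implicit Arguments.
Unset Strict Implicit.

Theorem proposition2p2 (R : rcfType) (n : nat) (f : {mpoly R[n]}) (a : nat) :
  (1 <= n <= 3)%N -> good f -> (0 < a)%N ->
  (exists g h : {mpoly R[n]},
      [/\ good g, good h, Nmon g = (a * Nmon f)%N
        & Nmon h = (a * Nmon f - (a - 1))%N]) /\
  (forall Gam : seq 'M[complex R]_n,
      diag_unitary_group Gam -> gamma_invariant Gam f ->
      exists g h : {mpoly R[n]},
        [/\ good g, good h, Nmon g = (a * Nmon f)%N
          & Nmon h = (a * Nmon f - (a - 1))%N]
        /\ gamma_invariant Gam g /\ gamma_invariant Gam h).
Proof.
move=> /andP [n1 _] Hf a0.
have nz : f != 0.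
  pose i0 : 'I_n := Ordinal n1.
  pose x := fun i : 'I_n => ((i == i0)%:R : R).
  have sx : \sum_(i < n) x i = 1.
    rewrite (bigD1 i0) //= big1 ?addr0 /x ?eqxx // => j /negbTE -> //.
  apply/eqP => f0; case: Hf => H1 _ _; have := H1 x sx.
  by rewrite f0 meval0 => /eqP; rewrite eq_sym oner_eq0.
pose m0 := mlead f.
have m0f : m0 \in msupp f by exact: mlead_supp.
have m0max : forall m, m \in msupp f -> (mdeg m <= mdeg m0)%N.
  by move=> m mf; apply: lemc_mdeg; apply: msupp_le_mlead.
have c0 : 0 < f@_m0.
  case: Hf => _ H2 _; rewrite lt_def H2 andbT; by rewrite -mcoeff_msupp.
have l1 : 0 < f@_m0 / 2 by rewrite divr_gt0.
have l2 : f@_m0 / 2 < f@_m0 by rewrite ltr_pdivrMr // ltr_pMr // ltr1n.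
have [Gg Ng] := Pk_good Hf m0f m0max l1 (ltW l2) (a - 1).
have [Gh Nh] := Pk_good Hf m0f m0max c0 (lexx _) (a - 1).
rewrite Nmon_full // in Ng; rewrite Nmon_cut // in Nh.
have N1 : (0 < Nmon f)%N by rewrite /Nmon; case: (msupp f) m0f.
have eg : Nmon (Pk f (f@_m0 / 2 *: 'X_[m0]) (a - 1)) = (a * Nmon f)%N.
  by rewrite Ng -[in RHS](subnK a0) mulnDl mul1n addnC.
have eh : Nmon (Pk f (f@_m0 *: 'X_[m0]) (a - 1)) = (a * Nmon f - (a - 1))%N.
  rewrite Nh -[in RHS](subnK a0); move: (a - 1)%N => b.
  case: (Nmon f) N1 => // N _; rewrite addnK; exact: key.
split.
  exists (Pk f (f@_m0 / 2 *: 'X_[m0]) (a - 1)), (Pk f (f@_m0 *: 'X_[m0]) (a - 1)).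
  by split; [exact: Gg | exact: Gh | exact: eg | exact: eh].
move=> Gam [_ _ _ Dg _] Hinv.
exists (Pk f (f@_m0 / 2 *: 'X_[m0]) (a - 1)), (Pk f (f@_m0 *: 'X_[m0]) (a - 1)).
have e := ginv_extract Dg Hinv m0f.
have hX := ginvX Dg e.
split; first by split; [exact: Gg | exact: Gh | exact: eg | exact: eh].
split.
  apply: ginvPk; first exact: Hinv.
  exact: ginvZ.
apply: ginvPk; first exact: Hinv.
exact: ginvZ.
Qed.
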